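(* Let $(A,B,\mathfrak H)$ be a P-module. Then either every non-zero vector of $\mathfrak H$ is annihilated by all rays, or there exists a vector of $\mathfrak H$ contained in some periodic ray $p$.
   Context: A P-module is $(A,B,\mathfrak H)$ with $\mathfrak H$ a finite-dimensional complex Hilbert space and $A,B$ operators with $A^*A+B^*B=\mathrm{id}$. A ray is an infinite binary sequence $p=x_1x_2\cdots$; $p_n=x_1\cdots x_n$. For a finite binary word $w=x_1\cdots x_n$, $w\xi:=X_{x_n}\cdots X_{x_1}\xi$ where $X_0=A$, $X_1=B$. A non-zero vector $\xi$ is contained in the ray $p$ if $\|p_n\xi\|=\|\xi\|$ for all $n$; it is annihilated by all rays if $\lim_n\|q_n\xi\|=0$ for every ray $q$. A ray is periodic if it equals $w^\infty$ for some finite non-empty word $w$. *)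

(* Defs.v *)
From HB Require Import structures.
From mathcomp Require Import all_boot all_order all_algebra.
From mathcomp Require Import complex.
From mathcomp Require Import all_classical all_reals topology normedtype sequences.
Set Implicit Arguments. Unset Strict Implicit. Unset Printing Implicit Defensive.
Import Order.TTheory GRing.Theory Num.Theory.
Import numFieldNormedType.Exports.
Local Open Scope ring_scope.
Local Open Scope classical_set_scope.

(* The Hilbert space H is C^n (column vectors) with the standard inner product. *)
Definition adjmx (R : rcfType) (n : nat) (M : 'M[R[i]]_n) : 'M[R[i]]_n :=
  map_mx Num.conj (M^T).

Definition hnorm2 (R : rcfType) (n : nat) (v : 'cV[R[i]]_n) : R :=
  \sum_(k < n) ((complex.Re (v k ord0)) ^+ 2 + (complex.Im (v k ord0)) ^+ 2).

Definition hnorm (R : rcfType) (n : nat) (v : 'cV[R[i]]_n) : R :=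
  Num.sqrt (hnorm2 v).

Definition Pmodule (R : rcfType) (n : nat) (A B : 'M[R[i]]_n) : Prop :=
  adjmx A *m A + adjmx B *m B = 1%:M.

Definition Xop (R : rcfType) (n : nat) (A B : 'M[R[i]]_n) (b : bool) : 'M[R[i]]_n :=
  if b then B else A.

(* w xi = X_{x_m} ... X_{x_1} xi  for w = x_1 ... x_m *)
Definition word_act (R : rcfType) (n : nat) (A B : 'M[R[i]]_n)
  (w : seq bool) (xi : 'cV[R[i]]_n) : 'cV[R[i]]_n :=
  foldl (fun v b => Xop A B b *m v) xi w.

(* a ray p = x_1 x_2 ... is a function nat -> bool (x_{k+1} = p k);
   prefix p m = x_1 ... x_m *)
Definition prefix (p : nat -> bool) (m : nat) : seq bool := mkseq p m.

Definition contained_in (R : rcfType) (n : nat) (A B : 'M[R[i]]_n)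
  (p : nat -> bool) (xi : 'cV[R[i]]_n) : Prop :=
  xi != 0 /\ forall m : nat, hnorm (word_act A B (prefix p m) xi) = hnorm xi.

Definition annihilated_by_all_rays (R : realType) (n : nat) (A B : 'M[R[i]]_n)
  (xi : 'cV[R[i]]_n) : Prop :=
  forall q : nat -> bool,
    (fun m : nat => hnorm (word_act A B (prefix q m) xi)) @ \oo --> (0 : R).

Definition periodic_ray (p : nat -> bool) : Prop :=
  exists w : seq bool, w != [::] /\ forall k : nat, p k = nth false w (k %% size w).

(* Main.v *)
Require Import Defs.
From HB Require Import structures.
From mathcomp Require Import all_boot all_order all_algebra.
From mathcomp Require Import complex.
From mathcomp Require Import all_classical all_reals topology normedtype sequences.
From mathcomp Require Import ring lra zify.
From mathcomp Require Import derive.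
Import Order.TTheory GRing.Theory Num.Theory.
Local Open Scope ring_scope. Local Open Scope complex_scope. Local Open Scope ring_scope.
Set Implicit Arguments. Unset Strict Implicit. Unset Printing Implicit Defensive.
Definition cadj (R : rcfType) (n : nat) (v : 'cV[R[i]]_n) : 'rV[R[i]]_n := map_mx Num.conj v^T.

Lemma cadjM (R : rcfType) n m (v : 'cV[R[i]]_m) (N : 'M[R[i]]_(n,m)) :
  cadj (N *m v) = cadj v *m map_mx Num.conj N^T.
Proof. by rewrite /cadj trmx_mul map_mxM. Qed.

Lemma conjM_self (R : rcfType) (x : R[i]) : Num.conj x * x = ((complex.Re x)^+2 + (complex.Im x)^+2)%:C.
Proof. case: x => a b /=. rewrite /GRing.mul /=. congr (_ +i* _); rewrite /=; ring. Qed.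

Lemma hnorm2C (R : rcfType) n (v : 'cV[R[i]]_n) : (hnorm2 v)%:C = (cadj v *m v) 0 0.
Proof.
rewrite /hnorm2 mxE rmorph_sum /=. apply: eq_bigr => k _.
by rewrite /cadj !mxE conjM_self.
Qed.

Lemma hnorm2_ge0 (R : rcfType) n (v : 'cV[R[i]]_n) : 0 <= hnorm2 v.
Proof. by apply: sumr_ge0 => k _; apply: addr_ge0; apply: sqr_ge0. Qed.

Lemma hnorm2_eq0 (R : rcfType) n (v : 'cV[R[i]]_n) : hnorm2 v = 0 -> v = 0.
Proof.
move=> /eqP; rewrite psumr_eq0 => [/allP H|k _]; last by apply: addr_ge0; apply: sqr_ge0.
apply/matrixP => k j; rewrite (ord1 j) mxE.
have /H : k \in index_enum 'I_n by rewrite mem_index_enum.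
rewrite /= paddr_eq0 ?sqr_ge0 // !sqrf_eq0 => /andP[/eqP h1 /eqP h2].
by move: (v k 0) h1 h2 => [a b] /= -> ->.
Qed.

Lemma hnorm2_Pyth (R : rcfType) n (A B : 'M[R[i]]_n) (v : 'cV[R[i]]_n) :
  Pmodule A B -> hnorm2 (A *m v) + hnorm2 (B *m v) = hnorm2 v.
Proof.
move=> HP.
have: ((hnorm2 (A *m v) + hnorm2 (B *m v))%:C = (hnorm2 v)%:C :> R[i]).
  rewrite rmorphD /= !hnorm2C.
  transitivity ((cadj (A*m v) *m (A *m v) + cadj (B*m v) *m (B *m v)) 0 0); first by rewrite [in RHS]mxE.
  rewrite !cadjM !mulmxA -!(mulmxA (cadj v)) -mulmxDr -mulmxDl.
  by move: HP; rewrite /Pmodule /adjmx => ->; rewrite mul1mx.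
by move=> /(congr1 (@complex.Re R)).
Qed.

Definition Pm (R : rcfType) n (A B : 'M[R[i]]_n) (w : seq bool) : 'M[R[i]]_n :=
  foldl (fun M b => Xop A B b *m M) 1%:M w.

Lemma foldl_Pm (R : rcfType) n (A B : 'M[R[i]]_n) (w : seq bool) (M : 'M[R[i]]_n) :
  foldl (fun M b => Xop A B b *m M) M w = Pm A B w *m M.
Proof.
rewrite /Pm; elim: w M => [|b w IH] M /=; first by rewrite mul1mx.
by rewrite IH [in RHS]IH mulmx1 mulmxA.
Qed.

Lemma Pm_cat (R : rcfType) n (A B : 'M[R[i]]_n) u z :
  Pm A B (u ++ z) = Pm A B z *m Pm A B u.
Proof. by rewrite {1}/Pm foldl_cat foldl_Pm. Qed.

Lemma Pm_cons (R : rcfType) n (A B : 'M[R[i]]_n) x z :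
  Pm A B (x :: z) = Pm A B z *m Xop A B x.
Proof. by rewrite -cat1s Pm_cat /Pm /= mulmx1. Qed.

Lemma Pm_nil (R : rcfType) n (A B : 'M[R[i]]_n) : Pm A B [::] = 1%:M.
Proof. by []. Qed.

Lemma word_actE (R : rcfType) n (A B : 'M[R[i]]_n) (w : seq bool) v :
  word_act A B w v = Pm A B w *m v.
Proof.
rewrite /word_act; elim: w v => [|b w IH] v /=; first by rewrite /Pm /= mul1mx.
by rewrite IH Pm_cons mulmxA.
Qed.

Lemma Pm1 (R : rcfType) n (A B : 'M[R[i]]_n) x : Pm A B [:: x] = Xop A B x.
Proof. by rewrite /Pm /= mulmx1. Qed.

Lemma hn_X (R : rcfType) n (A B : 'M[R[i]]_n) x v : Pmodule A B ->
  hnorm2 (Xop A B x *m v) + hnorm2 (Xop A B (~~ x) *m v) = hnorm2 v.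
Proof. by move=> HP; case: x; rewrite /= ?(addrC (hnorm2 (B *m v))) hnorm2_Pyth. Qed.

Lemma hn_contract (R : rcfType) n (A B : 'M[R[i]]_n) w v : Pmodule A B ->
  hnorm2 (Pm A B w *m v) <= hnorm2 v.
Proof.
move=> HP; elim: w v => [|x w IH] v; first by rewrite Pm_nil mul1mx.
rewrite Pm_cons -mulmxA; apply: le_trans (IH _) _.
rewrite -(hn_X x v HP) lerDl; exact: hnorm2_ge0.
Qed.

Definition iso (R : rcfType) n (A B : 'M[R[i]]_n) w v := hnorm2 (Pm A B w *m v) = hnorm2 v.

Lemma iso_cat (R : rcfType) n (A B : 'M[R[i]]_n) u z v : Pmodule A B ->
  iso A B (u ++ z) v <-> iso A B u v /\ iso A B z (Pm A B u *m v).
Proof.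
move=> HP; rewrite /iso Pm_cat -mulmxA.
have h1 := hn_contract z (Pm A B u *m v) HP.
have h2 := hn_contract u v HP.
split; last by case=> -> ->.
move=> E; rewrite E in h1; have E2 : hnorm2 (Pm A B u *m v) = hnorm2 v by apply/eqP; rewrite eq_le h2 h1.
by split => //; rewrite E E2.
Qed.

Lemma iso_cons (R : rcfType) n (A B : 'M[R[i]]_n) x z v : Pmodule A B ->
  iso A B (x :: z) v <-> Xop A B (~~ x) *m v = 0 /\ iso A B z (Xop A B x *m v).
Proof.
move=> HP; rewrite -cat1s iso_cat // /iso !Pm1.
have h0 := hn_X x v HP; have h3 := hnorm2_ge0 (Xop A B (~~ x) *m v).
split; case=> h1 h2; split => //.
- by apply: hnorm2_eq0; lra.
- have h4 : hnorm2 (Xop A B (~~ x) *m v) = 0.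
    by rewrite h1 /hnorm2 big1 // => k _; rewrite mxE /=; lra.
  lra.
Qed.

Fixpoint Sm (R : rcfType) n (A B : 'M[R[i]]_n) (w : seq bool) : 'M[R[i]]_n :=
  match w with
  | [::] => 1%:M
  | x :: w' => (kermx (Xop A B (~~ x))^T :&: kermx ((Xop A B x)^T *m cokermx (Sm A B w')))%MS
  end.

Lemma Sm_spec (R : rcfType) n (A B : 'M[R[i]]_n) w (u : 'rV[R[i]]_n) : Pmodule A B ->
  (u <= Sm A B w)%MS <-> iso A B w u^T.
Proof.
move=> HP; elim: w u => [|x w IH] u /=.
  by rewrite submx1 /iso Pm_nil mul1mx.
rewrite iso_cons // sub_capmx.
have -> : Xop A B x *m u^T = (u *m (Xop A B x)^T)^T by rewrite trmx_mul trmxK.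
rewrite !sub_kermx -IH submxE mulmxA; split.
  move=> /andP[/eqP h1 h2]; split => //.
  by rewrite -(trmxK (Xop A B (~~ x))) -trmx_mul h1 trmx0.
case=> h1 h2; rewrite h2 andbT; apply/eqP.
by apply: trmx_inj; rewrite trmx_mul trmxK h1 trmx0.
Qed.

Lemma row0_eq0 (R : rcfType) n (u : 'rV[R[i]]_n) : hnorm2 u^T = 0 -> u = 0.
Proof. by move/hnorm2_eq0 => h; apply: trmx_inj; rewrite h trmx0. Qed.

Definition mN (R : rcfType) n (A B : 'M[R[i]]_n) (N : nat) : nat :=
  (\max_(t : N.-tuple bool) \rank (Sm A B t))%N.

Lemma mN_ge (R : rcfType) n (A B : 'M[R[i]]_n) w : (\rank (Sm A B w) <= mN A B (size w))%N.
Proof. exact: (leq_bigmax (in_tuple w)). Qed.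

Lemma mN_ex (R : rcfType) n (A B : 'M[R[i]]_n) N :
  exists w, size w = N /\ \rank (Sm A B w) = mN A B N.
Proof.
have h : (0 < #|{: N.-tuple bool}|)%N by rewrite card_tuple card_bool expn_gt0.
have [t ht] := bigop.eq_bigmax (fun t : N.-tuple bool => \rank (Sm A B t)) h.
by exists t; rewrite size_tuple /mN ht.
Qed.

Lemma Sm_prefix (R : rcfType) n (A B : 'M[R[i]]_n) u z : Pmodule A B ->
  (Sm A B (u ++ z) <= Sm A B u)%MS.
Proof.
move=> HP; apply/row_subP => k; apply/Sm_spec => //.
have /(Sm_spec _ _ HP) := row_sub k (Sm A B (u ++ z)).
by case/(iso_cat _ _ _ HP).
Qed.

Lemma mN_mono (R : rcfType) n (A B : 'M[R[i]]_n) N M : Pmodule A B ->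
  (N <= M)%N -> (mN A B M <= mN A B N)%N.
Proof.
move=> HP hNM; have [w [sw <-]] := mN_ex A B M.
have sz : size (take N w) = N by rewrite size_take sw; case: ltngtP hNM => // ->.
have := mN_ge A B (take N w); rewrite sz => h; apply: leq_trans h.
by apply: mxrankS; rewrite -{1}(cat_take_drop N w); exact: Sm_prefix.
Qed.

Lemma stab (f : nat -> nat) : (forall N M, (N <= M)%N -> (f M <= f N)%N) ->
  exists N0, forall M, (N0 <= M)%N -> f M = f N0.
Proof.
move=> hf; suff: forall k N, (f N <= k)%N -> exists N0, forall M, (N0 <= M)%N -> f M = f N0.
  by move/(_ (f 0%N) 0%N (leqnn _)).
elim=> [|k IH] N hN.
  have e : f N = 0%N by apply/eqP; rewrite -leqn0.
  exists N => M hM; rewrite e; apply/eqP; rewrite -leqn0 -e; exact: hf.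
have [H|H] := pselect (forall M, (N <= M)%N -> f M = f N); first by exists N.
have [[M [hM1 hM2]]|H2] := pselect (exists M, (N <= M)%N /\ f M <> f N); last first.
  exfalso; apply: H => M hM; case: (eqVneq (f M) (f N)) => // hne.
  by exfalso; apply: H2; exists M; split => //; exact/eqP.
apply: (IH M).
have := hf _ _ hM1; rewrite leq_eqVlt => /orP[/eqP//|]; move=> h.
by rewrite -ltnS (leq_trans h hN).
Qed.

Lemma hnorm2_0 (R : rcfType) n : hnorm2 (0 : 'cV[R[i]]_n) = 0.
Proof. by rewrite /hnorm2 big1 // => k _; rewrite mxE /= expr0n /= addr0. Qed.

Lemma img_eq (R : rcfType) n (A B : 'M[R[i]]_n) w t N0 : Pmodule A B ->
  (t + N0 <= size w)%N -> \rank (Sm A B w) = mN A B N0 ->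
  (Sm A B w *m (Pm A B (take t w))^T == Sm A B (take N0 (drop t w)))%MS /\
  \rank (Sm A B w *m (Pm A B (take t w))^T) = \rank (Sm A B w).
Proof.
move=> HP hsz hrank.
set P := Pm A B (take t w); set Q := take N0 (drop t w).
have key : forall u, (u <= Sm A B w)%MS -> iso A B (take t w) u^T /\ iso A B Q (P *m u^T).
  move=> u /(Sm_spec _ _ HP); rewrite -{1}(cat_take_drop t w).
  rewrite -{1}(cat_take_drop N0 (drop t w)).
  by case/(iso_cat _ _ _ HP) => h1 /(iso_cat _ _ _ HP) [h2 _].
have sub1 : (Sm A B w *m P^T <= Sm A B Q)%MS.
  apply/row_subP => k; rewrite row_mul; apply/Sm_spec => //.
  rewrite trmx_mul trmxK; exact: (key _ (row_sub k _)).2.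
have rk : \rank (Sm A B w *m P^T) = \rank (Sm A B w).
  have := mxrank_mul_ker (Sm A B w) P^T.
  suff -> : \rank (Sm A B w :&: kermx P^T) = 0%N by rewrite addn0.
  apply/eqP; rewrite mxrank_eq0 -submx0; apply/row_subP => k.
  set r := row k _.
  have hr1 : (r <= Sm A B w)%MS := submx_trans (row_sub k _) (capmxSl _ _).
  have hr2 : r *m P^T = 0.
    by apply/sub_kermxP; exact: submx_trans (row_sub k _) (capmxSr _ _).
  have [h1 _] := key _ hr1.
  move: h1; rewrite /iso -/P.
  have -> : P *m r^T = 0 by rewrite -(trmxK P) -trmx_mul hr2 trmx0.
  by rewrite hnorm2_0 => /esym /row0_eq0 ->; rewrite sub0mx.
have szQ : size Q = N0 by rewrite /Q size_takel // size_drop; lia.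
have rQ : (\rank (Sm A B Q) <= \rank (Sm A B w))%N.
  by rewrite hrank -szQ; exact: mN_ge.
split => //; apply/andP; split => //.
rewrite -(mxrank_leqif_sup sub1).2 eqn_leq mxrankS //= rk //.
Qed.

Lemma mkseqD (T : Type) (f : nat -> T) a b :
  mkseq f (a + b) = mkseq f a ++ mkseq (fun k => f (a + k)%N) b.
Proof. by rewrite /mkseq iotaD map_cat add0n; congr (_ ++ _); rewrite -{1}(addn0 a) iotaDl -map_comp. Qed.

Lemma mkseq_period (z : seq bool) j :
  mkseq (fun k => nth false z (k %% size z)) (j * size z) = flatten (nseq j z).
Proof.
elim: j => [|j IH] //=.
rewrite mulSn mkseqD; congr (_ ++ _).
  rewrite -[RHS](mkseq_nth false z).
  rewrite /mkseq; apply/eq_in_map => k; rewrite mem_iota => /andP[_ hk].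
  by rewrite modn_small.
rewrite -IH; apply: eq_mkseq => k; by rewrite modnDl.
Qed.

Lemma loop_found (R : rcfType) n (A B : 'M[R[i]]_n) w t1 t2 N0 : Pmodule A B ->
  (t1 < t2)%N -> (t2 + N0 <= size w)%N -> \rank (Sm A B w) = mN A B N0 ->
  (0 < mN A B N0)%N -> take N0 (drop t1 w) = take N0 (drop t2 w) ->
  exists (p : nat -> bool) (xi : 'cV[R[i]]_n), periodic_ray p /\ contained_in A B p xi.
Proof.
move=> HP h12 hsz hrank hpos hQ.
have h1s : (t1 + N0 <= size w)%N by lia.
have [E1 rk1] := @img_eq _ _ A B w t1 N0 HP h1s hrank.
have [E2 _] := @img_eq _ _ A B w t2 N0 HP hsz hrank.
set P1 := Pm A B (take t1 w) in E1 rk1.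
set P2 := Pm A B (take t2 w) in E2.
set V := Sm A B w *m P1^T in E1 rk1.
have hV2 : (Sm A B w *m P2^T <= V)%MS.
  move: E1 E2 => /andP[_ h1] /andP[h2 _]; rewrite hQ in h1.
  exact: submx_trans h2 h1.
set z := drop t1 (take t2 w).
have ht2 : (t2 <= size w)%N by lia.
have htake : take t2 w = take t1 w ++ z.
  by rewrite -{1}(cat_take_drop t1 (take t2 w)) take_takel // ltnW.
have hP2 : P2 = Pm A B z *m P1 by rewrite /P2 htake Pm_cat.
have inv : forall u, (u <= V)%MS -> iso A B z u^T /\ (u *m (Pm A B z)^T <= V)%MS.
  move=> u /submxP [D ->]; rewrite mulmxA.
  have hs := submxMl D (Sm A B w); set s := D *m Sm A B w in hs *.
  have := (Sm_spec _ _ HP).1 hs; rewrite -(cat_take_drop t2 w) => /(iso_cat _ _ _ HP) [+ _].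
  rewrite htake => /(iso_cat _ _ _ HP) [_ h]; split.
    by rewrite trmx_mul trmxK.
  apply: submx_trans hV2; rewrite -mulmxA -trmx_mul -hP2; exact: submxMr.
have iter : forall j u, (u <= V)%MS -> iso A B (flatten (nseq j z)) u^T.
  elim=> [|j IH] u hu /=; first by rewrite /iso Pm_nil mul1mx.
  have [h1 h2] := inv u hu.
  apply/(iso_cat _ _ _ HP); split => //.
  by have := IH _ h2; rewrite trmx_mul trmxK.
have [[k hk]|hnone] := pselect (exists k, row k V != 0); last first.
  exfalso; have V0 : V = 0.
    apply/row_matrixP => k; rewrite row0; apply/eqP; apply: contra_notT hnone => hk.
    by exists k.
  by move: hpos; rewrite -hrank -rk1 V0 mxrank0.
have szz : size z = (t2 - t1)%N by rewrite /z size_drop size_takel.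
set p := fun k => nth false z (k %% size z).
exists p, (row k V)^T; split.
  exists z; split => //; apply/eqP => z0; move: szz; rewrite z0 /=; lia.
split.
  apply: contra hk => /eqP h; apply/eqP; apply: trmx_inj; by rewrite h trmx0.
move=> m; rewrite /hnorm word_actE; congr Num.sqrt.
have hL : (0 < size z)%N by rewrite szz; lia.
have := iter m _ (row_sub k V); rewrite -mkseq_period.
have -> : (m * size z = m + (m * size z - m))%N by nia.
by rewrite mkseqD => /(iso_cat _ _ _ HP) [].
Qed.

Lemma periodic_case (R : rcfType) n (A B : 'M[R[i]]_n) N0 : Pmodule A B ->
  (0 < mN A B N0)%N -> (forall M, (N0 <= M)%N -> mN A B M = mN A B N0) ->
  exists (p : nat -> bool) (xi : 'cV[R[i]]_n), periodic_ray p /\ contained_in A B p xi.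
Proof.
move=> HP hpos hst.
set K := (2 ^ N0)%N.
have [w [sw hw]] := mN_ex A B (K + N0).
have hrank : \rank (Sm A B w) = mN A B N0 by rewrite hw; apply: hst; lia.
pose f := fun t : 'I_K.+1 => insubd (nseq_tuple N0 false) (take N0 (drop t w)).
have hf : forall t : 'I_K.+1, val (f t) = take N0 (drop t w).
  move=> t; rewrite /f val_insubd size_takel ?eqxx // size_drop sw.
  have := ltn_ord t; lia.
have : ~~ injectiveb f.
  apply/negP => /injectiveP inj; have := leq_card f inj.
  by rewrite card_ord card_tuple card_bool -/K ltnn.
case/injectivePn => t1 [t2 hne heq].
have hQ : take N0 (drop t1 w) = take N0 (drop t2 w) by rewrite -!hf heq.
have l1 := ltn_ord t1; have l2 := ltn_ord t2.
case: (ltngtP t1 t2) => [h|h|h].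
- apply: (loop_found HP h _ hrank hpos hQ); lia.
- apply: (loop_found HP h _ hrank hpos (esym hQ)); lia.
- by exfalso; move: hne; rewrite (ord_inj h) eqxx.
Qed.

Lemma strict_zero (R : rcfType) n (A B : 'M[R[i]]_n) w : Pmodule A B ->
  mN A B (size w) = 0%N -> forall v, v != 0 -> hnorm2 (Pm A B w *m v) < hnorm2 v.
Proof.
move=> HP h0 v v0; rewrite lt_neqAle hn_contract // andbT.
apply/eqP => E.
have : (v^T <= Sm A B w)%MS by apply/Sm_spec => //; rewrite /iso trmxK.
have : Sm A B w = 0 by apply/eqP; rewrite -mxrank_eq0 -leqn0 -h0 mN_ge.
move=> ->; rewrite submx0 => /eqP h.
by move: v0; rewrite -(trmxK v) h trmx0 eqxx.
Qed.

Lemma Pm_mono (R : rcfType) n (A B : 'M[R[i]]_n) (q : nat -> bool) m m' v : Pmodule A B ->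
  (m <= m')%N -> hnorm2 (Pm A B (Defs.prefix q m') *m v) <= hnorm2 (Pm A B (Defs.prefix q m) *m v).
Proof.
move=> HP h; rewrite /Defs.prefix -(subnKC h) mkseqD Pm_cat -mulmxA; exact: hn_contract.
Qed.

Lemma decay (R : rcfType) n (A B : 'M[R[i]]_n) (q : nat -> bool) N1 rho v : Pmodule A B ->
  0 <= rho -> (forall w, size w = N1 -> forall v, hnorm2 (Pm A B w *m v) <= rho * hnorm2 v) ->
  forall k, hnorm2 (Pm A B (Defs.prefix q (k * N1)) *m v) <= rho ^+ k * hnorm2 v.
Proof.
move=> HP hr hw; elim=> [|k IH]; first by rewrite mul0n /Defs.prefix /= Pm_nil mul1mx expr0 mul1r.
rewrite mulSn addnC /Defs.prefix mkseqD Pm_cat -mulmxA.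
apply: le_trans (hw _ _ _) _; first by rewrite size_mkseq.
by rewrite exprS -mulrA ler_wpM2l.
Qed.

Import numFieldNormedType.Exports.
Local Open Scope classical_set_scope.

Lemma decay_cvg (R : realType) n (A B : 'M[R[i]]_n) (q : nat -> bool) N1 rho xi : Pmodule A B ->
  (0 < N1)%N -> 0 <= rho -> rho < 1 ->
  (forall w, size w = N1 -> forall v, hnorm2 (Pm A B w *m v) <= rho * hnorm2 v) ->
  (fun m : nat => hnorm (word_act A B (Defs.prefix q m) xi)) @ \oo --> (0 : R).
Proof.
move=> HP hN hr0 hr1 hw.
apply/cvgrPdist_lt => e e0.
set C := hnorm2 xi.
have hC : 0 <= C := hnorm2_ge0 xi.
have e2 : 0 < e ^+ 2 / (C + 1) by apply: divr_gt0; [exact: exprn_gt0|lra].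
have hrho : `|rho| < 1 by rewrite ger0_norm.
have /cvgrPdist_lt /(_ _ e2) [k _ hk] := cvg_expr hrho.
have hk' : rho ^+ k < e ^+ 2 / (C + 1).
  by have := hk k (leqnn k); rewrite /= sub0r normrN ger0_norm // exprn_ge0.
exists (k * N1)%N => // m /= hm.
rewrite sub0r normrN ger0_norm ?sqrtr_ge0 // /hnorm word_actE.
rewrite -(ger0_norm (ltW e0)) -sqrtr_sqr ltr_sqrt ?exprn_gt0 //.
apply: le_lt_trans (Pm_mono _ _ HP hm) _.
apply: le_lt_trans (decay _ _ HP hr0 hw k) _.
set e' := e ^+ 2 / (C + 1) in e2 hk' *.
have he : e' * (C + 1) = e ^+ 2 by rewrite /e' divfK //; apply: lt0r_neq0; lra.
apply: le_lt_trans (ler_wpM2r hC (ltW hk')) _.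
rewrite -he ltr_pM2l //; lra.
Qed.
Import numFieldNormedType.Exports.
Local Open Scope classical_set_scope.

Lemma cont_sum (T : topologicalType) (R : realType) (I : Type) (r : seq I) (F : I -> T -> R) :
  (forall i, continuous (F i)) -> continuous (fun x => \sum_(i <- r) F i x).
Proof.
move=> hF; elim: r => [|i r IH].
  have -> : (fun x => \sum_(i <- [::]) F i x) = fun=> 0 by apply/funext => x; rewrite big_nil.
  exact: cst_continuous.
have -> : (fun x => \sum_(j <- i :: r) F j x) = (F i) + (fun x => \sum_(j <- r) F j x).
  by apply/funext => x; rewrite big_cons.
by move=> x; apply: continuousD; [exact: hF|exact: IH].
Qed.

Lemma cont_mul (T : topologicalType) (R : realType) (f g : T -> R) :
  continuous f -> continuous g -> continuous (fun x => f x * g x).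
Proof. by move=> hf hg x; apply: continuousM; [exact: hf|exact: hg]. Qed.

Lemma cont_add (T : topologicalType) (R : realType) (f g : T -> R) :
  continuous f -> continuous g -> continuous (fun x => f x + g x).
Proof. by move=> hf hg x; apply: continuousD; [exact: hf|exact: hg]. Qed.

Lemma cont_sub (T : topologicalType) (R : realType) (f g : T -> R) :
  continuous f -> continuous g -> continuous (fun x => f x - g x).
Proof. by move=> hf hg x; apply: continuousB; [exact: hf|exact: hg]. Qed.

Definition cv (R : rcfType) n (x : 'rV[R]_(n + n)) : 'cV[R[i]]_n :=
  \col_k ((x 0 (lshift n k)) +i* (x 0 (rshift n k))).

Definition realify (R : rcfType) n (v : 'cV[R[i]]_n) : 'rV[R]_(n + n) :=
  row_mx (\row_k complex.Re (v k 0)) (\row_k complex.Im (v k 0)).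

Lemma cv_realify (R : rcfType) n (v : 'cV[R[i]]_n) : cv (realify v) = v.
Proof.
apply/matrixP => k j; rewrite (ord1 j) [LHS]mxE /realify row_mxEl row_mxEr !mxE.
by case: (v k 0).
Qed.

Lemma Re_sum (R : rcfType) (I : Type) (r : seq I) (F : I -> R[i]) :
  complex.Re (\sum_(i <- r) F i) = \sum_(i <- r) complex.Re (F i).
Proof. by apply: (big_morph (@complex.Re R)) => // -[a b] [c d]. Qed.

Lemma Im_sum (R : rcfType) (I : Type) (r : seq I) (F : I -> R[i]) :
  complex.Im (\sum_(i <- r) F i) = \sum_(i <- r) complex.Im (F i).
Proof. by apply: (big_morph (@complex.Im R)) => // -[a b] [c d]. Qed.

Lemma hnorm2_cvE (R : rcfType) n (W : 'M[R[i]]_n) (x : 'rV[R]_(n + n)) :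
  hnorm2 (W *m cv x) = \sum_(k < n)
   ((\sum_(j < n) (complex.Re (W k j) * x 0 (lshift n j) - complex.Im (W k j) * x 0 (rshift n j))) *
    (\sum_(j < n) (complex.Re (W k j) * x 0 (lshift n j) - complex.Im (W k j) * x 0 (rshift n j))) +
    (\sum_(j < n) (complex.Re (W k j) * x 0 (rshift n j) + complex.Im (W k j) * x 0 (lshift n j))) *
    (\sum_(j < n) (complex.Re (W k j) * x 0 (rshift n j) + complex.Im (W k j) * x 0 (lshift n j)))).
Proof.
rewrite /hnorm2; apply: eq_bigr => k _; rewrite !expr2 mxE Re_sum Im_sum.
have e1 : forall j, complex.Re (W k j * cv x j 0) =
   complex.Re (W k j) * x 0 (lshift n j) - complex.Im (W k j) * x 0 (rshift n j).
  by move=> j; rewrite mxE; case: (W k j) => a b; rewrite /GRing.mul /=.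
have e2 : forall j, complex.Im (W k j * cv x j 0) =
   complex.Re (W k j) * x 0 (rshift n j) + complex.Im (W k j) * x 0 (lshift n j).
  by move=> j; rewrite mxE; case: (W k j) => a b; rewrite /GRing.mul /= addrC.
by rewrite (eq_bigr _ (fun j _ => e1 j)) (eq_bigr _ (fun j _ => e2 j)).
Qed.

Lemma cont_f (R : realType) n (W : 'M[R[i]]_n) :
  continuous (fun x : 'rV[R]_(n + n) => hnorm2 (W *m cv x)).
Proof.
rewrite (funext (hnorm2_cvE W)).
apply: cont_sum => k.
have cc : forall j, continuous (fun x : 'rV[R]_(n + n) => x 0 j) by move=> j; exact: coord_continuous.
have cst : forall c : R, continuous (fun _ : 'rV[R]_(n + n) => c) by move=> c; exact: cst_continuous.
apply: cont_add; apply: cont_mul; apply: cont_sum => j;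
  (apply: cont_sub || apply: cont_add); apply: cont_mul => //.
Qed.

Lemma hnorm2_scale (R : rcfType) n (a : R) (v : 'cV[R[i]]_n) :
  hnorm2 (a%:C *: v) = a ^+ 2 * hnorm2 v.
Proof.
rewrite /hnorm2 mulr_sumr; apply: eq_bigr => k _; rewrite mxE.
case: (v k 0) => x y; simpc; rewrite /=; ring.
Qed.

Lemma entry_le (R : rcfType) n (x : 'rV[R]_(n + n)) (j : 'I_(n + n)) :
  x 0 j ^+ 2 <= hnorm2 (cv x).
Proof.
have -> : hnorm2 (cv x) = \sum_(j < n + n) x 0 j ^+ 2.
  rewrite big_split_ord /= -big_split /=; apply: eq_bigr => k _; by rewrite mxE.
rewrite (bigD1 j) //= lerDl; apply: sumr_ge0 => i _; exact: sqr_ge0.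
Qed.

Lemma unif (R : realType) n (W : 'M[R[i]]_n) :
  (forall v, v != 0 -> hnorm2 (W *m v) < hnorm2 v) ->
  exists rho, 0 <= rho /\ rho < 1 /\ forall v, hnorm2 (W *m v) <= rho * hnorm2 v.
Proof.
move=> hW.
have [[v0 hv0]|hno] := pselect (exists v : 'cV[R[i]]_n, v != 0); last first.
  exists 0; split => //; split => // v.
  have -> : v = 0 by apply/eqP; apply: contra_notT hno => h; exists v.
  by rewrite mulmx0 hnorm2_0 mul0r.
pose K := [set x : 'rV[R]_(n + n) | hnorm2 (cv x) = 1].
have scaleK : forall v, v != 0 ->
    K (realify ((Num.sqrt (hnorm2 v))^-1%:C *: v)) /\
    (Num.sqrt (hnorm2 v)) ^+ 2 = hnorm2 v /\ 0 < Num.sqrt (hnorm2 v).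
  move=> v hv.
  have hpos : 0 < hnorm2 v.
    rewrite lt_neqAle hnorm2_ge0 andbT; apply/eqP => h; move: hv; by rewrite (hnorm2_eq0 (esym h)) eqxx.
  have s2 : (Num.sqrt (hnorm2 v)) ^+ 2 = hnorm2 v by rewrite sqr_sqrtr // ltW.
  have sp : 0 < Num.sqrt (hnorm2 v) by rewrite sqrtr_gt0.
  split => //; rewrite /K /= cv_realify hnorm2_scale exprVn s2 mulVf //.
  exact: lt0r_neq0.
have K0 : K !=set0 by exists (realify ((Num.sqrt (hnorm2 v0))^-1%:C *: v0)); exact: (scaleK _ hv0).1.
have Kc : compact K.
  apply: bounded_closed_compact.
    apply: filterS (nbhs_pinfty_ge (num_real (1 : R))) => M hM x Kx.
    apply: le_trans hM; have -> : `|x| = mx_norm x by []. rewrite mx_normrE.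
    apply: bigmax_le => // -[i j] _ /=; rewrite (ord1 i).
    rewrite -(expr_le1 (_ : (0 < 2)%N)) // ?normr_ge0 // real_normK ?num_real //.
    by have := entry_le x j; rewrite /K /= in Kx; rewrite Kx.
  have -> : K = (fun x => hnorm2 (cv x)) @^-1` [set y | y = 1] by [].
  apply: preimage_closed; last exact: closed_eq.
  move=> x _; have := @cont_f R n 1%:M; under eq_fun do rewrite mul1mx; exact.
have [c Kc' hc] := compact_EVT_max K0 Kc (continuous_subspaceT (@cont_f R n W)).
move: Kc'; rewrite in_setE /K /= => Kc1.
exists (hnorm2 (W *m cv c)); split; first exact: hnorm2_ge0.
split.
  rewrite -Kc1; apply: hW; apply/eqP => h; move: Kc1; by rewrite h hnorm2_0 => /eqP; rewrite eq_sym oner_eq0.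
move=> v; have [->|hv] := eqVneq v 0; first by rewrite mulmx0 hnorm2_0 mulr0.
have [hK [s2 sp]] := scaleK v hv.
have := hc _ (mem_set hK); rewrite cv_realify -scalemxAr hnorm2_scale exprVn s2 => h.
set s := hnorm2 v in h s2 sp *.
have hs0 : 0 < s by rewrite -s2 exprn_gt0.
by rewrite -ler_pdivrMr // mulrC.
Qed.



Lemma unif_list (R : realType) n (Ws : seq 'M[R[i]]_n) :
  (forall W, W \in Ws -> forall v, v != 0 -> hnorm2 (W *m v) < hnorm2 v) ->
  exists rho, 0 <= rho /\ rho < 1 /\ forall W, W \in Ws -> forall v, hnorm2 (W *m v) <= rho * hnorm2 v.
Proof.
elim: Ws => [|W Ws IH] hWs.
  by exists 0; split => //; split => // W; rewrite in_nil.
have [r1 [h10 [h11 h1]]] := unif (hWs W (mem_head _ _)).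
have [r2 [h20 [h21 h2]]] : exists rho, 0 <= rho /\ rho < 1 /\ forall W, W \in Ws -> forall v, hnorm2 (W *m v) <= rho * hnorm2 v.
  by apply: IH => W' hW'; apply: hWs; rewrite inE hW' orbT.
exists (Num.max r1 r2); split; first by rewrite le_max h10.
split; first by rewrite gt_max h11 h21.
move=> W'; rewrite inE => /orP[/eqP ->|hW'] v.
  apply: le_trans (h1 v) _; apply: ler_wpM2r; [exact: hnorm2_ge0|by rewrite le_max lexx].
apply: le_trans (h2 _ hW' v) _; apply: ler_wpM2r; [exact: hnorm2_ge0|by rewrite le_max lexx orbT].
Qed.

Theorem proposition2p10 (R : realType) (n : nat) (A B : 'M[R[i]]_n) :
  Pmodule A B ->
  (forall xi : 'cV[R[i]]_n, xi != 0 -> annihilated_by_all_rays A B xi) \/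
  (exists (p : nat -> bool) (xi : 'cV[R[i]]_n),
      periodic_ray p /\ contained_in A B p xi).
Proof.
move=> HP.
have [N0 hN0] := stab (fun N M h => @mN_mono _ _ A B N M HP h).
have [h0|hpos] := posnP (mN A B N0); last by right; exact: periodic_case HP hpos hN0.
left => xi xi0 q.
have hz : mN A B N0.+1 = 0%N by rewrite hN0.
pose Ws := [seq Pm A B (val t) | t <- enum {: N0.+1.-tuple bool}].
have hWs : forall W, W \in Ws -> forall v, v != 0 -> hnorm2 (W *m v) < hnorm2 v.
  move=> W /mapP [t _ ->]; apply: strict_zero => //; by rewrite size_tuple.
have [rho [hr0 [hr1 hW]]] := unif_list hWs.
apply: (@decay_cvg R n A B q N0.+1 rho xi HP) => // w sw v.
apply: hW; apply/mapP; exists (@Tuple _ _ w (introT eqP sw)) => //; by rewrite mem_enum.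
Qed.
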